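(* Let $K$ be a simplex in a topological vector space $F$ and let $T:K\to 2^{K}$ be a correspondence. Assume that for each neighborhood $V$ of the origin in $F$ there is a weakly naturally quasiconvex correspondence $T^{V}:K\to 2^{K}$ such that $\mathrm{Gr}(T^{V})\subset \mathrm{cl}\,\mathrm{Gr}(T_V)$. Then there exists $x^*\in K$ such that $x^*\in\overline{T}(x^* )$.
   Context: A simplex is the convex hull of a finite affinely independent set. For a correspondence $T:X\to 2^Y$, $\mathrm{Gr}(T)=\{(x,y)\in X\times Y: y\in T(x)\}$; $\overline{T}(x)=\{y\in Y:(x,y)\in \mathrm{cl}_{X\times Y}\mathrm{Gr}(T)\}$; for $V\subset F$, $T_V:X\to 2^Y$ is defined by $T_V(x)=(T(x)+V)\cap Y$. $\Delta_{n-1}=\{(\lambda_1,\dots,\lambda_n)\in\mathbb{R}^n:\sum_i\lambda_i=1,\ \lambda_i\ge 0\}$. Weakly naturally quasiconvex (WNQ): let $X,Y$ be nonempty convex subsets of topological vector spaces. A correspondence $T:X\to 2^{Y}$ is weakly naturally quasiconvex if for each $n\in\mathbb{N}$ and each finite set $\{x_1,\dots,x_n\}\subset X$ there exist $y_i\in T(x_i)$ ($i=1,\dots,n$) and a bijection $g:\Delta_{n-1}\to\Delta_{n-1}$ (depending on $x_1,\dots,x_n$) of the form $g(\lambda_1,\dots,\lambda_n)=(g_1(\lambda_1),\dots,g_n(\lambda_n))$, where each $g_i:[0,1]\to[0,1]$ is continuous with $g_i(0)=0$ and $g_i(1)=1$, such that for every $(\lambda_1,\dots,\lambda_n)\in\Delta_{n-1}$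 we have $\sum_{i=1}^n g_i(\lambda_i)y_i\in T\big(\sum_{i=1}^n\lambda_i x_i\big)$. *)

(* Defs.v *)
From Stdlib Require Import Reals.
Open Scope R_scope.

Record TVS := {
  carrier :> Type;
  vzero : carrier;
  vadd : carrier -> carrier -> carrier;
  vopp : carrier -> carrier;
  vscal : R -> carrier -> carrier;
  vadd_assoc : forall x y z, vadd x (vadd y z) = vadd (vadd x y) z;
  vadd_comm : forall x y, vadd x y = vadd y x;
  vadd_0 : forall x, vadd x vzero = x;
  vadd_opp : forall x, vadd x (vopp x) = vzero;
  vscal_1 : forall x, vscal 1 x = x;
  vscal_assoc : forall a b x, vscal a (vscal b x) = vscal (a * b) x;
  vscal_distr_v : forall a x y, vscal a (vadd x y) = vadd (vscal a x) (vscal a y);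
  vscal_distr_s : forall a b x, vscal (a + b) x = vadd (vscal a x) (vscal b x);
  is_open : (carrier -> Prop) -> Prop;
  open_full : is_open (fun _ => True);
  open_inter : forall U W, is_open U -> is_open W -> is_open (fun x => U x /\ W x);
  open_union : forall (I : Type) (U : I -> carrier -> Prop),
      (forall i, is_open (U i)) -> is_open (fun x => exists i, U i x);
  vadd_cont : forall x y W, is_open W -> W (vadd x y) ->
      exists U1 U2, is_open U1 /\ is_open U2 /\ U1 x /\ U2 y /\
        (forall a b, U1 a -> U2 b -> W (vadd a b));
  vscal_cont : forall r x W, is_open W -> W (vscal r x) ->
      exists d U, d > 0 /\ is_open U /\ U x /\
        (forall s z, Rabs (s - r) < d -> U z -> W (vscal s z))
}.

Arguments vzero {_}.
Arguments vadd {_} _ _.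
Arguments vscal {_} _ _.
Arguments is_open {_} _.

Section Defs.
Variable F : TVS.

Fixpoint vsum (n : nat) (f : nat -> F) : F :=
  match n with
  | O => vzero
  | S m => vadd (vsum m f) (f m)
  end.

Fixpoint rsum (n : nat) (f : nat -> R) : R :=
  match n with
  | O => 0
  | S m => rsum m f + f m
  end.

Definition in_Delta (n : nat) (lam : nat -> R) : Prop :=
  (forall i, (i < n)%nat -> 0 <= lam i) /\ rsum n lam = 1.

Definition aff_indep (m : nat) (v : nat -> F) : Prop :=
  forall c : nat -> R, rsum m c = 0 ->
    vsum m (fun i => vscal (c i) (v i)) = vzero ->
    forall i, (i < m)%nat -> c i = 0.

Definition is_simplex (K : F -> Prop) : Prop :=
  exists (m : nat) (v : nat -> F), (1 <= m)%nat /\ aff_indep m v /\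
    forall x, K x <-> exists lam, in_Delta m lam /\
                        x = vsum m (fun i => vscal (lam i) (v i)).

Definition nbhd0 (V : F -> Prop) : Prop :=
  exists U, is_open U /\ U vzero /\ forall z, U z -> V z.

(* A correspondence T : X -> 2^Y is represented by T : F -> F -> Prop,
   T x y meaning y \in T(x).  Graph in X x Y: *)
Definition Gr (X : F -> Prop) (T : F -> F -> Prop) (p : F * F) : Prop :=
  X (fst p) /\ T (fst p) (snd p).

(* closure in X x Y (product of subspace topologies) of S *)
Definition clXY (X Y : F -> Prop) (S : F * F -> Prop) (p : F * F) : Prop :=
  X (fst p) /\ Y (snd p) /\
  forall U W, is_open U -> is_open W -> U (fst p) -> W (snd p) ->
    exists q, S q /\ X (fst q) /\ Y (snd q) /\ U (fst q) /\ W (snd q).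

Definition Tbar (X Y : F -> Prop) (T : F -> F -> Prop) (x y : F) : Prop :=
  Y y /\ clXY X Y (Gr X T) (x, y).

Definition T_V (Y : F -> Prop) (T : F -> F -> Prop) (V : F -> Prop) (x y : F) : Prop :=
  (exists t v, T x t /\ V v /\ y = vadd t v) /\ Y y.

Definition cont01 (g : R -> R) : Prop :=
  forall t, 0 <= t <= 1 -> forall eps, eps > 0 -> exists d, d > 0 /\
    forall s, 0 <= s <= 1 -> Rabs (s - t) < d -> Rabs (g s - g t) < eps.

Definition WNQ (X Y : F -> Prop) (T : F -> F -> Prop) : Prop :=
  forall (n : nat) (x : nat -> F),
    (forall i, (i < n)%nat -> X (x i)) ->
    (forall i j, (i < n)%nat -> (j < n)%nat -> x i = x j -> i = j) ->
    exists (y : nat -> F) (g : nat -> R -> R),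
      (forall i, (i < n)%nat -> T (x i) (y i)) /\
      (forall i, (i < n)%nat ->
         cont01 (g i) /\ g i 0 = 0 /\ g i 1 = 1 /\
         (forall t, 0 <= t <= 1 -> 0 <= g i t <= 1)) /\
      (* g = (g_1,...,g_n) is a bijection Delta_{n-1} -> Delta_{n-1} *)
      (forall lam, in_Delta n lam -> in_Delta n (fun i => g i (lam i))) /\
      (forall lam mu, in_Delta n lam -> in_Delta n mu ->
         (forall i, (i < n)%nat -> g i (lam i) = g i (mu i)) ->
         forall i, (i < n)%nat -> lam i = mu i) /\
      (forall mu, in_Delta n mu -> exists lam, in_Delta n lam /\
         forall i, (i < n)%nat -> g i (lam i) = mu i) /\
      (forall lam, in_Delta n lam ->
         T (vsum n (fun i => vscal (lam i) (x i)))
           (vsum n (fun i => vscal (g i (lam i)) (y i)))).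

End Defs.

(* Main.v *)
Require Import Defs.
From Stdlib Require Import Reals Lra Lia List Classical ClassicalEpsilon.
From mathcomp Require all_boot all_order all_algebra all_classical all_reals all_analysis Rstruct Rstruct_topology.
Open Scope R_scope.

Definition cube (m:nat) (l: nat -> R) := (forall i, (i < m)%nat -> 0 <= l i <= 1) /\ (forall i, (m <= i)%nat -> l i = 0).

Module Cpt.
Import all_boot all_order all_algebra all_classical all_reals all_analysis Rstruct Rstruct_topology.
Import Order.TTheory GRing.Theory Num.Theory.
Local Open Scope classical_set_scope.
Local Open Scope ring_scope.

Definition fromRow {m:nat} (v : 'rV[R]_m) : nat -> R :=
  fun n => match @insub _ (fun k => k < m)%N _ n with Some i => v ord0 i | None => 0 end.

Lemma fromRowE {m} (v : 'rV[R]_m) (i : 'I_m) : fromRow v i = v ord0 i.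
Proof. by rewrite /fromRow valK. Qed.

Lemma inP' (T : eqType) (x : T) (s : seq T) : List.In x s -> x \in s.
Proof. elim: s => //= a s IH [->|h]; rewrite in_cons ?eqxx //. by rewrite IH ?orbT. Qed.
Lemma inP'' (T : eqType) (x : T) (s : seq T) : x \in s -> List.In x s.
Proof. elim: s => //= a s IH; rewrite in_cons => /orP [/eqP ->|h]; [by left|by right; apply: IH]. Qed.

Lemma fromRow_cube m (v : 'rV[R]_m) : (forall i, (`[0,1]%classic (v ord0 i))) -> cube m (fromRow v).
Proof.
move=> H; split.
  move=> i /ssrnat.ltP im. have := H (Ordinal im). rewrite -(fromRowE v (Ordinal im)) /=.
  rewrite in_itv /=. move=> /andP [h1 h2]. split; apply/RleP; assumption.
move=> i /ssrnat.leP im. rewrite /fromRow insubF //. by rewrite ltnNge im.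
Qed.

Lemma cube_cover_mc (m:nat) (d : (nat -> R) -> R) : (forall l, cube m l -> Rlt 0 (d l)) ->
  exists L : list (nat -> R), (forall l, List.In l L -> cube m l) /\
   forall a, cube m a -> exists l, List.In l L /\ forall i, (i < m)%coq_nat -> Rlt (Rabs (Rminus (a i) (l i))) (d l).
Proof.
move=> dpos.
set C := [set v : 'rV[R]_m | forall i, (`[0,1]%classic (v ord0 i))].
have Cc : compact C. exact: (@rV_compact R m (fun=> `[0,1]%classic) (fun=> @segment_compact R 0 1)).

rewrite compact_cover in Cc.
have := Cc _ C (fun v => ball v (d (fromRow v))) (fun v _ => ball_open _ _).
case.
  move=> v Cv. exists v => //. apply: ballxx. apply/RltP. apply: dpos. exact: fromRow_cube.
move=> D' D'C cov.
exists (map (@fromRow m) (finmap.enum_fset D')); split.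
  move=> l /in_map_iff [v [<- vin]]. apply: fromRow_cube. have h : v \in C by apply: D'C; have := inP' _ _ _ vin; by [].
  by move: h; rewrite inE.
move=> a [a01 a0].
have aC : C (\row_(i < m) a i).
  move=> i /=. rewrite mxE in_itv /=. have [h1 h2] := a01 i (ssrnat.ltP (ltn_ord i)). 
  by apply/andP; split; apply/RleP.
have [v vD bv] := cov _ aC.
exists (fromRow v); split.
  apply/in_map_iff. exists v; split => //. exact: inP'' _ _ _ vD.
move=> i /ssrnat.ltP im. case: bv => _ /(_ ord0 (Ordinal im)).
rewrite /ball /= mxE -(fromRowE v (Ordinal im)) /= RabsE RminusE => h.
apply/RltP. by rewrite distrC.
Qed.
End Cpt.



Lemma vadd_0l (F : TVS) (x : F) : vadd vzero x = x.
Proof. rewrite vadd_comm. apply vadd_0. Qed.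

Lemma vadd_cancel (F : TVS) (a b c : F) : vadd a b = vadd a c -> b = c.
Proof.
  intro H.
  assert (E : forall z : F, vadd (vopp F a) (vadd a z) = z).
  { intro z. rewrite vadd_assoc. rewrite (vadd_comm _ (vopp F a) a), vadd_opp. apply vadd_0l. }
  rewrite <- (E b), <- (E c), H. reflexivity.
Qed.

Lemma vscal_0 (F : TVS) (x : F) : vscal 0 x = vzero.
Proof.
  apply (vadd_cancel F (vscal 0 x)). rewrite vadd_0, <- vscal_distr_s.
  f_equal. ring.
Qed.

Lemma vscal_zero (F : TVS) (a : R) : vscal a (@vzero F) = vzero.
Proof.
  apply (vadd_cancel F (vscal a vzero)). rewrite vadd_0, <- vscal_distr_v, vadd_0. reflexivity.
Qed.

Lemma vscal_neg (F : TVS) (v : F) : vadd v (vscal (-1) v) = vzero.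
Proof.
  rewrite <- (vscal_1 F v) at 1. rewrite <- vscal_distr_s.
  replace (1 + -1) with 0 by ring. apply vscal_0.
Qed.

Lemma vadd_sub (F : TVS) (t v : F) : vadd (vadd t v) (vscal (-1) v) = t.
Proof. rewrite <- vadd_assoc, vscal_neg. apply vadd_0. Qed.

Lemma vsum_ext (F : TVS) n (f g : nat -> F) :
  (forall i, (i < n)%nat -> f i = g i) -> vsum F n f = vsum F n g.
Proof.
  induction n; intros H; simpl. reflexivity.
  rewrite IHn by (intros; apply H; lia). rewrite H by lia. reflexivity.
Qed.

Lemma vadd_swap4 (F : TVS) (a b c d : F) :
  vadd (vadd a b) (vadd c d) = vadd (vadd a c) (vadd b d).
Proof.
  rewrite <- !vadd_assoc. f_equal. rewrite !vadd_assoc. f_equal. apply vadd_comm.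
Qed.

Lemma vsum_add (F : TVS) n (f g : nat -> F) :
  vsum F n (fun i => vadd (f i) (g i)) = vadd (vsum F n f) (vsum F n g).
Proof.
  induction n; simpl. rewrite vadd_0. reflexivity.
  rewrite IHn. apply vadd_swap4.
Qed.

Lemma vsum_scal (F : TVS) n a (f : nat -> F) :
  vscal a (vsum F n f) = vsum F n (fun i => vscal a (f i)).
Proof.
  induction n; simpl. apply vscal_zero.
  rewrite vscal_distr_v, IHn. reflexivity.
Qed.

Lemma vsum_zero (F : TVS) n : vsum F n (fun _ => vzero) = vzero.
Proof. induction n; simpl. reflexivity. rewrite IHn. apply vadd_0. Qed.

Lemma vscal_rsum (F : TVS) n c (x : F) :
  vscal (rsum n c) x = vsum F n (fun i => vscal (c i) x).
Proof.
  induction n; simpl. apply vscal_0.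
  rewrite vscal_distr_s, IHn. reflexivity.
Qed.

Lemma vsum_swap (F : TVS) n k (f : nat -> nat -> F) :
  vsum F n (fun i => vsum F k (fun j => f i j)) = vsum F k (fun j => vsum F n (fun i => f i j)).
Proof.
  induction n; simpl. symmetry. apply vsum_zero.
  rewrite IHn. symmetry. apply vsum_add.
Qed.

Definition comb (F : TVS) m (v : nat -> F) (l : nat -> R) : F :=
  vsum F m (fun i => vscal (l i) (v i)).

Lemma comb_comb (F : TVS) m (v : nat -> F) (l : nat -> R) (mu : nat -> nat -> R) :
  vsum F m (fun i => vscal (l i) (comb F m v (mu i))) =
  comb F m v (fun j => rsum m (fun i => l i * mu i j)).
Proof.
  unfold comb.
  transitivity (vsum F m (fun i => vsum F m (fun j => vscal (l i * mu i j) (v j)))).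
  { apply vsum_ext. intros i _. rewrite vsum_scal. apply vsum_ext. intros j _.
    apply vscal_assoc. }
  rewrite vsum_swap. apply vsum_ext. intros j _. symmetry. apply vscal_rsum.
Qed.

Lemma comb_sub (F : TVS) m (v : nat -> F) (a b : nat -> R) :
  vadd (comb F m v a) (vscal (-1) (comb F m v b)) = comb F m v (fun i => a i - b i).
Proof.
  unfold comb. rewrite vsum_scal, <- vsum_add. apply vsum_ext. intros i _.
  rewrite vscal_assoc, <- vscal_distr_s. f_equal. ring.
Qed.

Lemma rsum_ext n (f g : nat -> R) :
  (forall i, (i < n)%nat -> f i = g i) -> rsum n f = rsum n g.
Proof.
  induction n; intros H; simpl. reflexivity.
  rewrite IHn by (intros; apply H; lia). rewrite H by lia. reflexivity.
Qed.

Lemma rsum_add n (f g : nat -> R) : rsum n (fun i => f i + g i) = rsum n f + rsum n g.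
Proof. induction n; simpl. ring. rewrite IHn. ring. Qed.

Lemma rsum_scal n a (f : nat -> R) : a * rsum n f = rsum n (fun i => a * f i).
Proof. induction n; simpl. ring. rewrite <- IHn. ring. Qed.

Lemma rsum_zero n : rsum n (fun _ => 0) = 0.
Proof. induction n; simpl. ring. rewrite IHn. ring. Qed.

Lemma rsum_swap n k (f : nat -> nat -> R) :
  rsum n (fun i => rsum k (fun j => f i j)) = rsum k (fun j => rsum n (fun i => f i j)).
Proof.
  induction n; simpl. symmetry. apply rsum_zero.
  rewrite IHn. symmetry. apply rsum_add.
Qed.

Lemma rsum_nonneg n (f : nat -> R) : (forall i, (i < n)%nat -> 0 <= f i) -> 0 <= rsum n f.
Proof.
  induction n; intros H; simpl. lra.
  assert (0 <= rsum n f) by (apply IHn; intros; apply H; lia).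
  assert (0 <= f n) by (apply H; lia). lra.
Qed.

Lemma rsum_single n (f : nat -> R) i :
  (i < n)%nat -> (forall l, (l < n)%nat -> l <> i -> f l = 0) -> rsum n f = f i.
Proof.
  induction n; intros Hi H. lia. simpl.
  destruct (Nat.eq_dec i n) as [->|ne].
  - rewrite (rsum_ext n f (fun _ => 0)) by (intros; apply H; lia). rewrite rsum_zero. ring.
  - rewrite IHn by (try lia; intros; apply H; lia). rewrite (H n) by lia. ring.
Qed.

Lemma rsum_ge_term n (f : nat -> R) i :
  (i < n)%nat -> (forall l, (l < n)%nat -> 0 <= f l) -> f i <= rsum n f.
Proof.
  induction n; intros Hi H. lia. simpl.
  destruct (Nat.eq_dec i n) as [->|ne].
  - assert (0 <= rsum n f) by (apply rsum_nonneg; intros; apply H; lia). lra.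
  - assert (f i <= rsum n f) by (apply IHn; try lia; intros; apply H; lia).
    assert (0 <= f n) by (apply H; lia). lra.
Qed.

Lemma rsum_diff_bound n (a b : nat -> R) d :
  (forall i, (i < n)%nat -> Rabs (a i - b i) <= d) -> Rabs (rsum n a - rsum n b) <= INR n * d.
Proof.
  induction n; intros H; cbn [rsum]. rewrite Rminus_diag, Rabs_R0. simpl; lra.
  assert (H1 : Rabs (rsum n a - rsum n b) <= INR n * d) by (apply IHn; intros; apply H; lia).
  assert (H2 : Rabs (a n - b n) <= d) by (apply H; lia).
  rewrite S_INR.
  replace (rsum n a + a n - (rsum n b + b n)) with ((rsum n a - rsum n b) + (a n - b n)) by ring.
  eapply Rle_trans. apply Rabs_triang. lra.
Qed.

Lemma rsum_telescope K (f : nat -> R) : rsum K (fun k => f (S k)) - rsum K f = f K - f O.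
Proof. induction K; simpl. ring. lra. Qed.

Lemma in_Delta_le1 m l i : in_Delta m l -> (i < m)%nat -> 0 <= l i <= 1.
Proof.
  intros [H1 H2] Hi. split. apply H1; auto. rewrite <- H2. apply rsum_ge_term; auto.
Qed.

Lemma comb_cont (F : TVS) n (v : nat -> F) (l : nat -> R) (W : F -> Prop) :
  is_open W -> W (vsum F n (fun i => vscal (l i) (v i))) ->
  exists d, d > 0 /\ forall mu, (forall i, (i < n)%nat -> Rabs (mu i - l i) < d) ->
    W (vsum F n (fun i => vscal (mu i) (v i))).
Proof.
  revert W. induction n; intros W Wo Wl.
  - exists 1. split. lra. intros. simpl in *. exact Wl.
  - simpl in Wl.
    destruct (vadd_cont F _ _ W Wo Wl) as [U1 [U2 [U1o [U2o [HU1 [HU2 HU]]]]]].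
    destruct (IHn U1 U1o HU1) as [d1 [d1p Hd1]].
    destruct (vscal_cont F _ _ U2 U2o HU2) as [d2 [U [d2p [Uo [Uv HUd]]]]].
    exists (Rmin d1 d2). split. apply Rmin_pos; lra.
    intros mu Hmu. simpl. apply HU.
    + apply Hd1. intros i Hi. eapply Rlt_le_trans. apply Hmu. lia. apply Rmin_l.
    + apply HUd; auto. eapply Rlt_le_trans. apply Hmu. lia. apply Rmin_r.
Qed.

Lemma nat_floor (N : nat) (t : R) : 0 <= t <= INR N -> exists k, (k <= N)%nat /\ INR k <= t <= INR k + 1.
Proof.
  induction N; intros H.
  - exists O. simpl in *. split. lia. lra.
  - rewrite S_INR in H. destruct (Rle_lt_dec t (INR N)) as [h|h].
    + destruct (IHN (conj (proj1 H) h)) as [k [Hk1 Hk2]]. exists k. split. lia. exact Hk2.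
    + exists N. split. lia. lra.
Qed.

Lemma additive_id (h : R -> R) :
  h 1 = 1 ->
  (forall t, 0 <= t <= 1 -> 0 <= h t) ->
  (forall s t, 0 <= s -> 0 <= t -> s + t <= 1 -> h (s + t) = h s + h t) ->
  forall t, 0 <= t <= 1 -> h t = t.
Proof.
  intros h1 hpos hadd.
  assert (h0 : h 0 = 0). { assert (E := hadd 0 0). rewrite Rplus_0_r in E. lra. }
  assert (mono : forall s t, 0 <= s <= t -> t <= 1 -> h s <= h t).
  { intros s t Hs Ht. replace t with (s + (t - s)) by ring. rewrite hadd by lra.
    assert (0 <= h (t - s)) by (apply hpos; lra). lra. }
  assert (mult : forall N k, (0 < N)%nat -> (k <= N)%nat -> h (INR k / INR N) = INR k * h (1 / INR N)).
  { intros N k HN. induction k; intros Hk.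
    - simpl. unfold Rdiv. rewrite Rmult_0_l. rewrite h0. ring.
    - assert (HNr : 0 < INR N) by (apply lt_0_INR; lia).
      assert (HkN : INR (S k) <= INR N) by (apply le_INR; lia).
      rewrite S_INR in *.
      replace ((INR k + 1) / INR N) with (INR k / INR N + 1 / INR N) by (field; lra).
      assert (0 <= INR k) by apply pos_INR.
      rewrite hadd. rewrite IHk by lia. ring.
      apply Rmult_le_pos; [lra| left; apply Rinv_0_lt_compat; lra].
      unfold Rdiv; rewrite Rmult_1_l; left; apply Rinv_0_lt_compat; lra.
      replace (INR k / INR N + 1 / INR N) with ((INR k + 1) / INR N) by (field; lra).
      apply (Rmult_le_reg_r (INR N)); auto. unfold Rdiv. rewrite Rmult_assoc, Rinv_l by lra. lra. }
  assert (val : forall N k, (0 < N)%nat -> (k <= N)%nat -> h (INR k / INR N) = INR k / INR N).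
  { intros N k HN Hk. assert (HNr : 0 < INR N) by (apply lt_0_INR; lia).
    assert (E := mult N N HN (le_n _)). replace (INR N / INR N) with 1 in E by (field; lra).
    rewrite mult by auto. rewrite h1 in E.
    assert (h (1 / INR N) = 1 / INR N). { apply (Rmult_eq_reg_l (INR N)); [|lra]. rewrite <- E. field. lra. }
    rewrite H. field. lra. }
  intros t Ht.
  assert (bound : forall N, (0 < N)%nat -> Rabs (h t - t) <= 1 / INR N).
  { intros N HN. assert (HNr : 0 < INR N) by (apply lt_0_INR; lia).
    destruct (nat_floor N (t * INR N)) as [k [Hk1 Hk2]].
    { split. apply Rmult_le_pos; lra. assert (t * INR N <= 1 * INR N) by (apply Rmult_le_compat_r; lra). lra. }
    assert (L1 : INR k / INR N <= t).
    { apply (Rmult_le_reg_r (INR N)); auto. unfold Rdiv. rewrite Rmult_assoc, Rinv_l by lra. lra. }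
    assert (L2 : t <= INR k / INR N + 1 / INR N).
    { apply (Rmult_le_reg_r (INR N)); auto. unfold Rdiv. rewrite Rmult_plus_distr_r, !Rmult_assoc, Rinv_l by lra. lra. }
    assert (hk : INR k / INR N <= h t).
    { rewrite <- val with (N := N) (k := k) by auto. apply mono. split; auto.
      apply Rmult_le_pos. apply pos_INR. left; apply Rinv_0_lt_compat; lra. lra. }
    destruct (Nat.eq_dec k N) as [->|ne].
    - replace (INR N / INR N) with 1 in L1 by (field; lra). assert (t = 1) by lra. subst.
      rewrite h1. rewrite Rminus_diag, Rabs_R0. left. unfold Rdiv. rewrite Rmult_1_l. apply Rinv_0_lt_compat; lra.
    - assert (hk2 : h t <= INR (S k) / INR N).
      { rewrite <- val with (N := N) (k := S k) by lia. apply mono. split; [lra|].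
        rewrite S_INR. replace ((INR k + 1) / INR N) with (INR k / INR N + 1 / INR N) by (field; lra). lra.
        assert (INR (S k) <= INR N) by (apply le_INR; lia).
        apply (Rmult_le_reg_r (INR N)); auto. unfold Rdiv. rewrite Rmult_assoc, Rinv_l by lra. lra. }
      rewrite S_INR in hk2. replace ((INR k + 1) / INR N) with (INR k / INR N + 1 / INR N) in hk2 by (field; lra).
      apply Rabs_le. lra. }
  destruct (Req_dec (h t) t) as [e|ne]; auto.
  assert (pos : 0 < Rabs (h t - t)) by (apply Rabs_pos_lt; lra).
  destruct (archimed_cor1 _ pos) as [N [HN1 HN2]].
  assert (B := bound N HN2). unfold Rdiv in B. rewrite Rmult_1_l in B. lra.
Qed.

Definition e3 (i j k : nat) (a b c : R) : nat -> R := fun l =>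
  if Nat.eq_dec l i then a else if Nat.eq_dec l j then b else if Nat.eq_dec l k then c else 0.

Lemma rsum_three n (f : nat -> R) i j k :
  (i < n)%nat -> (j < n)%nat -> (k < n)%nat -> i <> j -> i <> k -> j <> k ->
  (forall l, (l < n)%nat -> l <> i -> l <> j -> l <> k -> f l = 0) ->
  rsum n f = f i + f j + f k.
Proof.
  intros Hi Hj Hk ij ik jk H.
  rewrite (rsum_ext n f (fun l => ((if Nat.eq_dec l i then f i else 0) + (if Nat.eq_dec l j then f j else 0))
                                 + (if Nat.eq_dec l k then f k else 0))).
  2:{ intros l Hl. destruct (Nat.eq_dec l i); destruct (Nat.eq_dec l j); destruct (Nat.eq_dec l k);
      subst; try lia; try ring. rewrite H by auto. ring. }
  rewrite !rsum_add.
  rewrite (rsum_single n _ i), (rsum_single n _ j), (rsum_single n _ k); auto;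
  try (intros l Hl ne; destruct (Nat.eq_dec l _); [lia|reflexivity]).
  destruct (Nat.eq_dec i i); destruct (Nat.eq_dec j j); destruct (Nat.eq_dec k k); try lia. ring.
Qed.

Lemma g_three n (g : nat -> R -> R) i j k a b c :
  (i < n)%nat -> (j < n)%nat -> (k < n)%nat -> i <> j -> i <> k -> j <> k ->
  (forall l, (l < n)%nat -> g l 0 = 0) ->
  (forall lam, in_Delta n lam -> in_Delta n (fun l => g l (lam l))) ->
  0 <= a -> 0 <= b -> 0 <= c -> a + b + c = 1 ->
  g i a + g j b + g k c = 1.
Proof.
  intros Hi Hj Hk ij ik jk g0 gD Ha Hb Hc Habc.
  assert (D : in_Delta n (e3 i j k a b c)).
  { split.
    - intros l Hl. unfold e3. destruct (Nat.eq_dec l i); destruct (Nat.eq_dec l j); destruct (Nat.eq_dec l k); lra.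
    - rewrite (rsum_three n _ i j k); auto.
      + unfold e3. destruct (Nat.eq_dec i i); destruct (Nat.eq_dec j i); destruct (Nat.eq_dec j j);
        destruct (Nat.eq_dec k i); destruct (Nat.eq_dec k j); destruct (Nat.eq_dec k k); try lia. lra.
      + intros l Hl h1 h2 h3. unfold e3. destruct (Nat.eq_dec l i); destruct (Nat.eq_dec l j); destruct (Nat.eq_dec l k); lia || reflexivity. }
  destruct (gD _ D) as [_ S].
  rewrite (rsum_three n _ i j k) in S; auto.
  - unfold e3 in S. destruct (Nat.eq_dec i i); destruct (Nat.eq_dec j i); destruct (Nat.eq_dec j j);
      destruct (Nat.eq_dec k i); destruct (Nat.eq_dec k j); destruct (Nat.eq_dec k k); try lia. exact S.
  - intros l Hl h1 h2 h3. unfold e3. destruct (Nat.eq_dec l i); destruct (Nat.eq_dec l j); destruct (Nat.eq_dec l k); try lia.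
    apply g0; auto.
Qed.

Lemma g_id_ijk n (g : nat -> R -> R) i j k :
  (i < n)%nat -> (j < n)%nat -> (k < n)%nat -> i <> j -> i <> k -> j <> k ->
  (forall l, (l < n)%nat -> g l 0 = 0 /\ g l 1 = 1 /\ (forall t, 0 <= t <= 1 -> 0 <= g l t <= 1)) ->
  (forall lam, in_Delta n lam -> in_Delta n (fun l => g l (lam l))) ->
  forall t, 0 <= t <= 1 -> g i t = t.
Proof.
  intros Hi Hj Hk ij ik jk Hg gD.
  assert (g0 : forall l, (l < n)%nat -> g l 0 = 0) by (intros; apply Hg; auto).
  apply additive_id.
  - apply Hg; auto.
  - intros t Ht. apply Hg; auto.
  - intros s t Hs Ht Hst.
    assert (E1 := g_three n g i j k s t (1 - s - t) Hi Hj Hk ij ik jk g0 gD Hs Ht ltac:(lra) ltac:(lra)).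
    assert (E2 := g_three n g i j k (s + t) 0 (1 - s - t) Hi Hj Hk ij ik jk g0 gD ltac:(lra) ltac:(lra) ltac:(lra) ltac:(lra)).
    assert (E3 := g_three n g i j k t 0 (1 - t) Hi Hj Hk ij ik jk g0 gD ltac:(lra) ltac:(lra) ltac:(lra) ltac:(lra)).
    assert (E4 := g_three n g i j k 0 t (1 - t) Hi Hj Hk ij ik jk g0 gD ltac:(lra) ltac:(lra) ltac:(lra) ltac:(lra)).
    rewrite (g0 j) in E2, E3 by auto. rewrite (g0 i) in E4 by auto.
    replace (1 - (s + t)) with (1 - s - t) in * by ring.
    lra.
Qed.

Lemma g_id n (g : nat -> R -> R) :
  (3 <= n)%nat ->
  (forall l, (l < n)%nat -> g l 0 = 0 /\ g l 1 = 1 /\ (forall t, 0 <= t <= 1 -> 0 <= g l t <= 1)) ->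
  (forall lam, in_Delta n lam -> in_Delta n (fun l => g l (lam l))) ->
  forall i, (i < n)%nat -> forall t, 0 <= t <= 1 -> g i t = t.
Proof.
  intros Hn Hg gD i Hi.
  destruct i as [|[|i']].
  - apply (g_id_ijk n g 0 1 2); auto; lia.
  - apply (g_id_ijk n g 1 0 2); auto; lia.
  - apply (g_id_ijk n g (S (S i')) 0 1); auto; lia.
Qed.

Definition Phi m (mu : nat -> nat -> R) (l : nat -> R) : nat -> R :=
  fun j => rsum m (fun i => l i * mu i j).

Lemma Phi_Delta m mu l : (forall i, (i < m)%nat -> in_Delta m (mu i)) -> in_Delta m l -> in_Delta m (Phi m mu l).
Proof.
  intros Hmu Hl. split.
  - intros j Hj. unfold Phi. apply rsum_nonneg. intros i Hi. apply Rmult_le_pos.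
    apply Hl; auto. apply (Hmu i Hi); auto.
  - unfold Phi. rewrite rsum_swap. destruct Hl as [_ Hl]. rewrite <- Hl.
    apply rsum_ext. intros i Hi. rewrite <- rsum_scal. destruct (Hmu i Hi) as [_ ->]. ring.
Qed.

Fixpoint itP m mu (k : nat) : nat -> R :=
  match k with
  | O => fun j => if Nat.eq_dec j 0 then 1 else 0
  | S k' => Phi m mu (itP m mu k')
  end.

Lemma itP_Delta m mu k : (1 <= m)%nat -> (forall i, (i < m)%nat -> in_Delta m (mu i)) -> in_Delta m (itP m mu k).
Proof.
  intros Hm Hmu. induction k; simpl.
  - split. intros j _. destruct (Nat.eq_dec j 0); lra.
    rewrite (rsum_single m _ 0). destruct (Nat.eq_dec 0 0); [reflexivity|lia]. lia.
    intros l _ ne. destruct (Nat.eq_dec l 0); [lia|reflexivity].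
  - apply Phi_Delta; auto.
Qed.

Lemma cesaro m mu : (1 <= m)%nat -> (forall i, (i < m)%nat -> in_Delta m (mu i)) ->
  forall eps, eps > 0 -> exists a, in_Delta m a /\ forall j, (j < m)%nat -> Rabs (Phi m mu a j - a j) < eps.
Proof.
  intros Hm Hmu eps Heps.
  destruct (archimed_cor1 eps Heps) as [K [HK1 HK2]].
  assert (KP : 0 < INR K) by (apply lt_0_INR; lia).
  set (a := fun j => / INR K * rsum K (fun k => itP m mu k j)).
  exists a. split.
  - split.
    + intros j Hj. unfold a. apply Rmult_le_pos. left; apply Rinv_0_lt_compat; lra.
      apply rsum_nonneg. intros k _. apply (itP_Delta m mu k Hm Hmu); auto.
    + unfold a. rewrite <- rsum_scal. rewrite <- rsum_swap.
      rewrite (rsum_ext K _ (fun _ => 1)). 2:{ intros k _. apply (itP_Delta m mu k Hm Hmu). }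
      clear a. assert (rsum K (fun _ => 1) = INR K).
      { clear. induction K. reflexivity. cbn [rsum]. rewrite IHK, S_INR. ring. }
      rewrite H. field. lra.
  - intros j Hj.
    assert (E : Phi m mu a j = / INR K * rsum K (fun k => itP m mu (S k) j)).
    { unfold Phi at 1. unfold a.
      transitivity (rsum m (fun i => / INR K * rsum K (fun k => itP m mu k i * mu i j))).
      { apply rsum_ext; intros i _. rewrite Rmult_assoc. f_equal. rewrite Rmult_comm, rsum_scal.
        apply rsum_ext; intros; ring. }
      transitivity (/ INR K * rsum m (fun i => rsum K (fun k => itP m mu k i * mu i j))).
      { symmetry; apply rsum_scal. }
      f_equal. rewrite rsum_swap. apply rsum_ext. intros k _. reflexivity. }
    rewrite E. unfold a.
    replace (/ INR K * rsum K (fun k => itP m mu (S k) j) - / INR K * rsum K (fun k => itP m mu k j))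
      with (/ INR K * (rsum K (fun k => itP m mu (S k) j) - rsum K (fun k => itP m mu k j))) by ring.
    rewrite (rsum_telescope K (fun k => itP m mu k j)).
    assert (A1 := in_Delta_le1 m _ j (itP_Delta m mu K Hm Hmu) Hj).
    assert (A2 := in_Delta_le1 m _ j (itP_Delta m mu 0 Hm Hmu) Hj).
    rewrite Rabs_mult, Rabs_inv, (Rabs_right (INR K)) by lra.
    eapply Rle_lt_trans; [|apply HK1].
    rewrite <- (Rmult_1_r (/ INR K)) at 2. apply Rmult_le_compat_l.
    left; apply Rinv_0_lt_compat; lra. apply Rabs_le. lra.
Qed.

Lemma fchoice {A : Type} (d : A) n (P : nat -> A -> Prop) :
  (forall i, (i < n)%nat -> exists a, P i a) -> exists f : nat -> A, forall i, (i < n)%nat -> P i (f i).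
Proof.
  induction n; intros H.
  - exists (fun _ => d). intros; lia.
  - destruct IHn as [f Hf]. intros; apply H; lia.
    destruct (H n (Nat.lt_succ_diag_r n)) as [a Ha].
    exists (fun i => if Nat.eq_dec i n then a else f i).
    intros i Hi. destruct (Nat.eq_dec i n). subst; auto. apply Hf; lia.
Qed.

Lemma vsum_single (F : TVS) n (f : nat -> F) i :
  (i < n)%nat -> (forall l, (l < n)%nat -> l <> i -> f l = vzero) -> vsum F n f = f i.
Proof.
  induction n; intros Hi H. lia. simpl.
  destruct (Nat.eq_dec i n) as [->|ne].
  - rewrite (vsum_ext F n f (fun _ => vzero)) by (intros; apply H; lia). rewrite vsum_zero. apply vadd_0l.
  - rewrite IHn by (try lia; intros; apply H; lia). rewrite (H n) by lia. apply vadd_0.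
Qed.

Definition ev (i : nat) : nat -> R := fun l => if Nat.eq_dec l i then 1 else 0.

Lemma ev_Delta m i : (i < m)%nat -> in_Delta m (ev i).
Proof.
  intros Hi. split. intros l _. unfold ev. destruct (Nat.eq_dec l i); lra.
  rewrite (rsum_single m _ i Hi). unfold ev. destruct (Nat.eq_dec i i); [reflexivity|lia].
  intros l _ ne. unfold ev. destruct (Nat.eq_dec l i); [lia|reflexivity].
Qed.

Lemma comb_ev (F : TVS) m (v : nat -> F) i : (i < m)%nat -> comb F m v (ev i) = v i.
Proof.
  intros Hi. unfold comb. rewrite (vsum_single F m _ i Hi).
  unfold ev. destruct (Nat.eq_dec i i); [apply vscal_1|lia].
  intros l _ ne. unfold ev. destruct (Nat.eq_dec l i); [lia|apply vscal_0].
Qed.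

Lemma rsum_sub n (a b : nat -> R) : rsum n (fun i => a i - b i) = rsum n a - rsum n b.
Proof. induction n; simpl. ring. rewrite IHn. ring. Qed.

Lemma coords_unique (F : TVS) m (v : nat -> F) a b :
  aff_indep F m v -> rsum m a = rsum m b -> comb F m v a = comb F m v b ->
  forall i, (i < m)%nat -> a i = b i.
Proof.
  intros Ha Hs Hc i Hi.
  assert (E := Ha (fun i => a i - b i)). simpl in E.
  assert (a i - b i = 0); [|lra].
  apply E; auto. rewrite rsum_sub. lra.
  fold (comb F m v (fun i => a i - b i)). rewrite <- comb_sub. rewrite Hc. apply vscal_neg.
Qed.

Definition mvec : nat -> R := fun l => if Nat.eq_dec l 0 then / 2 else if Nat.eq_dec l 1 then / 2 else 0.

Lemma mvec_Delta m : (2 <= m)%nat -> in_Delta m mvec.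
Proof.
  intros Hm. split. intros l _. unfold mvec. destruct (Nat.eq_dec l 0); destruct (Nat.eq_dec l 1); lra.
  rewrite (rsum_ext m mvec (fun l => ev 0 l * / 2 + ev 1 l * / 2)).
  2:{ intros l _. unfold mvec, ev. destruct (Nat.eq_dec l 0); destruct (Nat.eq_dec l 1); subst; try lia; lra. }
  rewrite (rsum_ext m _ (fun l => / 2 * ev 0 l + / 2 * ev 1 l)) by (intros; ring).
  rewrite rsum_add, <- !rsum_scal.
  destruct (ev_Delta m 0 ltac:(lia)) as [_ ->]. destruct (ev_Delta m 1 ltac:(lia)) as [_ ->]. lra.
Qed.

Definition K_of (F : TVS) m (v : nat -> F) (K : F -> Prop) :=
  forall x, K x <-> exists lam, in_Delta m lam /\ x = vsum F m (fun i => vscal (lam i) (v i)).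

Lemma approx_fp (F : TVS) m (v : nat -> F) (K : F -> Prop) (TV : F -> F -> Prop) :
  (1 <= m)%nat -> aff_indep F m v -> K_of F m v K ->
  (forall x y, K x -> TV x y -> K y) -> WNQ F K K TV ->
  forall eps, eps > 0 -> exists a b, in_Delta m a /\ in_Delta m b /\
    (forall j, (j < m)%nat -> Rabs (a j - b j) < eps) /\ TV (comb F m v a) (comb F m v b).
Proof.
  intros Hm Hai HK HTV Hw eps Heps.
  assert (Kc : forall l, in_Delta m l -> K (comb F m v l)).
  { intros l Hl. apply HK. exists l. split; auto. }
  destruct (Nat.eq_dec m 1) as [m1|m1].
  - subst m.
    destruct (Hw 1%nat (fun _ => v O)) as [y [g [Hy _]]].
    + intros i _. rewrite <- (comb_ev F 1 v 0) by lia. apply Kc. apply ev_Delta; lia.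
    + intros; lia.
    + assert (T0 := Hy O ltac:(lia)).
      assert (Ky : K (y O)). { apply (HTV (v O)); auto. rewrite <- (comb_ev F 1 v 0) by lia. apply Kc. apply ev_Delta; lia. }
      apply HK in Ky. destruct Ky as [mu [Hmu Ey]].
      exists (ev 0), mu. split. apply ev_Delta; lia. split. auto. split.
      * intros j Hj. assert (j = O) by lia. subst. destruct Hmu as [_ Hs]. simpl in Hs.
        unfold ev. destruct (Nat.eq_dec 0 0); [|lia]. replace (1 - mu O) with 0 by lra. rewrite Rabs_R0; lra.
      * rewrite comb_ev by lia. unfold comb. rewrite <- Ey. exact T0.
  - assert (Hm2 : (2 <= m)%nat) by lia.
    set (cx := fun i => if Compare_dec.lt_dec i m then ev i else mvec).
    assert (cxD : forall i, (i < S m)%nat -> in_Delta m (cx i)).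
    { intros i Hi. unfold cx. destruct (Compare_dec.lt_dec i m). apply ev_Delta; auto. apply mvec_Delta; auto. }
    set (x := fun i => comb F m v (cx i)).
    destruct (Hw (S m) x) as [y [g [Hy [Hg [gD [_ [_ Hfin]]]]]]].
    + intros i Hi. apply Kc. auto.
    + intros i j Hi Hj Exy.
      assert (E : forall l, (l < m)%nat -> cx i l = cx j l).
      { apply (coords_unique F m v); auto.
        destruct (cxD i Hi) as [_ ->]. destruct (cxD j Hj) as [_ ->]. reflexivity. }
      unfold cx in E. destruct (Compare_dec.lt_dec i m) as [im|im]; destruct (Compare_dec.lt_dec j m) as [jm|jm].
      * assert (E' := E i im). unfold ev in E'. destruct (Nat.eq_dec i i); [|lia].
        destruct (Nat.eq_dec i j); auto. lra.
      * assert (E' := E i im). unfold ev, mvec in E'. destruct (Nat.eq_dec i i); [|lia].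
        destruct (Nat.eq_dec i 0); [lra|]. destruct (Nat.eq_dec i 1); lra.
      * assert (E' := E j jm). unfold ev, mvec in E'. destruct (Nat.eq_dec j j); [|lia].
        destruct (Nat.eq_dec j 0); [lra|]. destruct (Nat.eq_dec j 1); lra.
      * lia.
    + assert (gid := g_id (S m) g ltac:(lia) (fun l Hl => match Hg l Hl with conj _ h => h end) gD).
      destruct (fchoice (fun _ => 0) m (fun i mu => in_Delta m mu /\ y i = comb F m v mu)) as [mu Hmu].
      { intros i Hi. assert (Ky : K (y i)). { apply (HTV (x i)). apply Kc. apply cxD; lia. apply Hy; lia. }
        apply HK in Ky. destruct Ky as [mu [H1 H2]]. exists mu. split; auto. }
      destruct (cesaro m mu Hm (fun i Hi => proj1 (Hmu i Hi)) eps Heps) as [a [Ha Hcl]].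
      exists a, (Phi m mu a). split; auto. split. apply Phi_Delta; auto. intros i Hi; apply Hmu; auto.
      split. intros j Hj. rewrite Rabs_minus_sym. apply Hcl; auto.
      set (lam := fun i => if Compare_dec.lt_dec i m then a i else 0).
      assert (lamD : in_Delta (S m) lam).
      { split. intros i Hi. unfold lam. destruct (Compare_dec.lt_dec i m). apply Ha; auto. lra.
        cbn [rsum]. unfold lam at 2. destruct (Compare_dec.lt_dec m m); [lia|].
        rewrite (rsum_ext m lam a). destruct Ha as [_ ->]. ring.
        intros i Hi. unfold lam. destruct (Compare_dec.lt_dec i m); [reflexivity|lia]. }
      assert (T1 := Hfin lam lamD).
      assert (L1 : vsum F (S m) (fun i => vscal (lam i) (x i)) = comb F m v a).
      { cbn [vsum]. unfold lam at 2. destruct (Compare_dec.lt_dec m m); [lia|]. rewrite vscal_0, vadd_0.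
        unfold comb. apply vsum_ext. intros i Hi. unfold lam, x, cx. destruct (Compare_dec.lt_dec i m); [|lia].
        rewrite comb_ev; auto. }
      assert (L2 : vsum F (S m) (fun i => vscal (g i (lam i)) (y i)) = comb F m v (Phi m mu a)).
      { cbn [vsum]. unfold lam at 2. destruct (Compare_dec.lt_dec m m); [lia|].
        destruct (Hg m ltac:(lia)) as [_ [-> _]]. rewrite vscal_0, vadd_0.
        unfold Phi. rewrite <- comb_comb. apply vsum_ext. intros i Hi.
        unfold lam. destruct (Compare_dec.lt_dec i m); [|lia]. rewrite gid by (try lia; apply in_Delta_le1 with m; auto).
        destruct (Hmu i Hi) as [_ ->]. reflexivity. }
      rewrite L1, L2 in T1. exact T1.
Qed.


Lemma cube_cover (m:nat) (d : (nat -> R) -> R) : (forall l, cube m l -> Rlt 0 (d l)) ->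
  exists L : list (nat -> R), (forall l, List.In l L -> cube m l) /\
   forall a, cube m a -> exists l, List.In l L /\ forall i, (i < m)%nat -> Rlt (Rabs (Rminus (a i) (l i))) (d l).
Proof. exact (Cpt.cube_cover_mc m d). Qed.

Definition Bad (F : TVS) (K : F -> Prop) (T : F -> F -> Prop) (V : F -> Prop) (x y : F) :=
  forall U' W', is_open U' -> is_open W' -> U' x -> W' y ->
    exists a b, K a /\ T_V F K T V a b /\ U' a /\ W' b.

Lemma Bad_mono (F : TVS) K T (V1 V2 : F -> Prop) x y : (forall z, V1 z -> V2 z) -> Bad F K T V1 x y -> Bad F K T V2 x y.
Proof.
  intros H B U' W' Uo Wo Ux Wy. destruct (B U' W' Uo Wo Ux Wy) as [a [b [Ka [[[t [w [Tt [Vw E]]]] Kb] [Ua Wb]]]]].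
  exists a, b. repeat split; auto. exists t, w. auto.
Qed.

Lemma list_min (L : list (nat -> R)) (d : (nat -> R) -> R) :
  (forall l, In l L -> 0 < d l) -> exists e, 0 < e /\ forall l, In l L -> e <= d l.
Proof.
  induction L as [|l0 L IH]; intros H.
  - exists 1. split. lra. intros l [].
  - destruct IH as [e [He Hl]]. intros; apply H; right; auto.
    assert (0 < d l0) by (apply H; left; auto).
    exists (Rmin e (d l0)). split. apply Rmin_pos; auto.
    intros l [<-|Hin]. apply Rmin_r. eapply Rle_trans. apply Rmin_l. auto.
Qed.

Lemma list_nbhd (F : TVS) (L : list (nat -> R)) (VF : (nat -> R) -> F -> Prop) :
  (forall l, In l L -> nbhd0 F (VF l)) -> nbhd0 F (fun z => forall l, In l L -> VF l z).
Proof.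
  induction L as [|l0 L IH]; intros H.
  - exists (fun _ => True). split. apply open_full. split. auto. intros z _ l [].
  - destruct IH as [U [Uo [U0 HU]]]. intros; apply H; right; auto.
    destruct (H l0 (or_introl eq_refl)) as [U1 [U1o [U10 HU1]]].
    exists (fun z => U z /\ U1 z). split. apply open_inter; auto. split. auto.
    intros z [Uz U1z] l [<-|Hin]. auto. apply HU; auto.
Qed.

Theorem theorem5 (F : TVS) (K : F -> Prop) (T : F -> F -> Prop) :
  is_simplex F K ->
  (forall x y, K x -> T x y -> K y) ->
  (forall V : F -> Prop, nbhd0 F V ->
     exists TV : F -> F -> Prop,
       (forall x y, K x -> TV x y -> K y) /\
       WNQ F K K TV /\
       (forall p, Gr F K TV p -> clXY F K K (Gr F K (T_V F K T V)) p)) ->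
  exists xs, K xs /\ Tbar F K K T xs xs.
Proof.
  intros [m [v [Hm [Hai HK]]]] HT HV.
  assert (HK' : K_of F m v K) by exact HK.
  apply NNPP; intro Hno.
  assert (Loc0 : forall z, K z -> exists U W, is_open U /\ is_open W /\ U z /\ W z /\
            forall a b, K a -> K b -> T a b -> U a -> W b -> False).
  { intros z Kz. apply NNPP; intro H. apply Hno. exists z. split; auto. split; auto.
    split; [auto|split;[auto|]]. intros U W Uo Wo Uz Wz. apply NNPP; intro H2. apply H.
    exists U, W. repeat split; auto. intros a b Ka Kb Tab Ua Wb. apply H2. exists (a, b).
    unfold Gr; simpl. auto. }
  set (Loc := fun (l : nat -> R) (d : R) (V : F -> Prop) =>
    forall a b, in_Delta m a -> in_Delta m b -> (forall i, (i < m)%nat -> Rabs (a i - l i) < d) ->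
      (forall i, (i < m)%nat -> Rabs (b i - l i) < d) -> ~ Bad F K T V (comb F m v a) (comb F m v b)).
  assert (Local : forall l, cube m l -> exists d V, d > 0 /\ nbhd0 F V /\ Loc l d V).
  { intros l [Hl1 Hl2]. destruct (Req_dec (rsum m l) 1) as [s1|s1].
    - assert (lD : in_Delta m l). { split; auto. intros i Hi; apply Hl1; auto. }
      assert (Kz : K (comb F m v l)). { apply HK. exists l. split; auto. }
      destruct (Loc0 _ Kz) as [U [W [Uo [Wo [Uz [Wz HUW]]]]]].
      assert (Wz' : W (vadd (comb F m v l) vzero)) by (rewrite vadd_0; auto).
      destruct (vadd_cont F _ _ W Wo Wz') as [A [B [Ao [Bo [Az [B0 HAB]]]]]].
      assert (B0' : B (vscal (-1) (@vzero F))) by (rewrite vscal_zero; auto).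
      destruct (vscal_cont F _ _ B Bo B0') as [d0 [U0 [d0p [U0o [U00 HU0]]]]].
      assert (No : is_open (fun x => U x /\ A x)) by (apply open_inter; auto).
      destruct (comb_cont F m v l (fun x => U x /\ A x) No (conj Uz Az)) as [d [dp Hd]].
      exists d, U0. split; auto. split. exists U0. split; auto.
      intros a b Ha Hb Hal Hbl Hbad.
      destruct (Hd a Hal) as [Ua _]. destruct (Hd b Hbl) as [_ Ab].
      destruct (Hbad U A Uo Ao Ua Ab) as [a' [b' [Ka' [[[t [w [Tt [Vw Eb]]]] Kb'] [Ua' Ab']]]]].
      apply (HUW a' t Ka' (HT a' t Ka' Tt) Tt Ua').
      rewrite <- (vadd_sub F t w), <- Eb. apply HAB; auto. apply HU0; auto.
      replace (-1 - -1) with 0 by ring. rewrite Rabs_R0. lra.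
    - set (d := Rabs (rsum m l - 1) / (INR m + 1)).
      assert (mp : 0 < INR m + 1) by (assert (0 <= INR m) by apply pos_INR; lra).
      assert (dp : d > 0). { unfold d. apply Rdiv_lt_0_compat; auto. apply Rabs_pos_lt. lra. }
      exists d, (fun _ => True). split; auto. split. exists (fun _ => True). split. apply open_full. auto.
      intros a b Ha Hb Hal Hbl _.
      assert (B := rsum_diff_bound m a l d (fun i Hi => Rlt_le _ _ (Hal i Hi))).
      destruct Ha as [_ Ha]. rewrite Ha in B.
      assert (E : Rabs (rsum m l - 1) = d * (INR m + 1)) by (unfold d; field; lra).
      rewrite Rabs_minus_sym in B. lra. }
  assert (Pch : forall l, exists p : R * (F -> Prop), cube m l -> fst p > 0 /\ nbhd0 F (snd p) /\ Loc l (fst p) (snd p)).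
  { intros l. destruct (classic (cube m l)) as [c|c].
    - destruct (Local l c) as [d [V H]]. exists (d, V). auto.
    - exists (1, fun _ => True). intro; contradiction. }
  set (P := fun l => proj1_sig (constructive_indefinite_description _ (Pch l))).
  assert (PP : forall l, cube m l -> fst (P l) > 0 /\ nbhd0 F (snd (P l)) /\ Loc l (fst (P l)) (snd (P l))).
  { intros l. unfold P. destruct (constructive_indefinite_description _ (Pch l)) as [p Hp]. exact Hp. }
  destruct (cube_cover m (fun l => fst (P l) / 2)) as [L [HLc HLcov]].
  { intros l c. destruct (PP l c) as [h _]. lra. }
  destruct (list_min L (fun l => fst (P l) / 2)) as [e [ep He]].
  { intros l Hl. destruct (PP l (HLc l Hl)) as [h _]. lra. }
  set (Vs := fun z => forall l, In l L -> snd (P l) z).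
  assert (Vsn : nbhd0 F Vs). { apply list_nbhd. intros l Hl. apply PP; auto. }
  destruct (HV Vs Vsn) as [TV [HTV [Hw Hgr]]].
  destruct (approx_fp F m v K TV Hm Hai HK' HTV Hw e ep) as [a [b [Ha [Hb [Hab Tab]]]]].
  set (a' := fun i => if Compare_dec.lt_dec i m then a i else 0).
  assert (ca : cube m a').
  { split. intros i Hi. unfold a'. destruct (Compare_dec.lt_dec i m); [|lia]. apply in_Delta_le1 with m; auto.
    intros i Hi. unfold a'. destruct (Compare_dec.lt_dec i m); [lia|reflexivity]. }
  destruct (HLcov a' ca) as [l [Hl Hal]].
  destruct (PP l (HLc l Hl)) as [Pl0 [_ HLoc]].
  apply (HLoc a b Ha Hb).
  - intros i Hi. assert (h := Hal i Hi). unfold a' in h. destruct (Compare_dec.lt_dec i m); [|lia]. lra.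
  - intros i Hi. assert (h := Hal i Hi). unfold a' in h. destruct (Compare_dec.lt_dec i m); [|lia].
    assert (h2 := Hab i Hi). assert (h3 := He l Hl). simpl in h3.
    replace (b i - l i) with ((b i - a i) + (a i - l i)) by ring.
    eapply Rle_lt_trans. apply Rabs_triang. rewrite Rabs_minus_sym in h2. lra.
  - apply (Bad_mono F K T Vs). intros z Hz. apply Hz; auto.
    intros U' W' Uo Wo Ux Wy.
    assert (G : Gr F K TV (comb F m v a, comb F m v b)).
    { split; simpl. apply HK. exists a. split; auto. exact Tab. }
    destruct (Hgr _ G) as [_ [_ H]].
    destruct (H U' W' Uo Wo Ux Wy) as [q [[_ Tq] [Kq1 [Kq2 [Uq Wq]]]]].
    exists (fst q), (snd q). auto.
Qed.
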